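(* Let $(X_{1,\infty},f_{1,\infty})$ be a topological nonautonomous dynamical system such that the sequence $f_{1,\infty}$ is equicontinuous. Then $h_{\mathrm{top}}(f^{[k]}_{1,\infty})=k\cdot h_{\mathrm{top}}(f_{1,\infty})$ for all $k\ge1$.
   Context: Topological NDS: compact metric spaces $(X_n,\varrho_n)$, continuous $f_n:X_n\to X_{n+1}$; $f_k^n=f_{k+n-1}\circ\cdots\circ f_k$, $f_k^0=\mathrm{id}$. Equicontinuity: for every $\varepsilon>0$ there is $\delta>0$ with $\varrho_{n+1}(f_nx,f_ny)<\varepsilon$ whenever $\varrho_n(x,y)<\delta$, uniformly in $n$. Topological entropy: with $\varrho_{1,n}(x,y)=\max_{0\le i<n}\varrho_{1+i}(f_1^ix,f_1^iy)$, let $r_{\mathrm{sep}}(n,\varepsilon)$ be the maximal cardinality of a subset of $X_1$ whose distinct points have $\varrho_{1,n}$-distance $>\varepsilon$; $h_{\mathrm{top}}(f_{1,\infty})=\lim_{\varepsilon\searrow0}\limsup_n\frac1n\log r_{\mathrm{sep}}(n,\varepsilon)$. The $k$-th power system is $X^{[k]}_{1,\infty}=\{X_{(n-1)k+1}\}_{n\ge1}$ with maps $f^{[k]}_{1,\infty}=\{f^k_{(n-1)k+1}\}_{n\ge1}$. *)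

(* Defs.v *)
From HB Require Import structures.
From mathcomp Require Import all_boot all_order all_algebra.
From mathcomp Require Import all_classical all_reals all_analysis.
Set Implicit Arguments. Unset Strict Implicit. Unset Printing Implicit Defensive.
Import Order.TTheory GRing.Theory Num.Theory.
Import numFieldNormedType.Exports.
Local Open Scope classical_set_scope.
Local Open Scope ring_scope.

Section NDS.
Variable R : realType.

Definition is_metric (T : Type) (d : T -> T -> R) : Prop :=
  [/\ forall x y, d x y = 0 <-> x = y,
      forall x y, d x y = d y x &
      forall x y z, d x z <= d x y + d y z].

Definition mopen (T : Type) (d : T -> T -> R) (U : set T) : Prop :=
  forall x, U x -> exists2 r : R, 0 < r & forall y, d x y < r -> U y.

Definition mcompact (T : Type) (d : T -> T -> R) : Prop :=
  forall (I : Type) (U : I -> set T),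
    (forall i, mopen d (U i)) -> (forall x, exists i, U i x) ->
    exists (m : nat) (s : 'I_m -> I), forall x, exists j, U (s j) x.

Definition mcontinuous (S T : Type) (dS : S -> S -> R) (dT : T -> T -> R)
  (g : S -> T) : Prop :=
  forall x (e : R), 0 < e -> exists2 delta : R, 0 < delta &
    forall y, dS x y < delta -> dT (g x) (g y) < e.

(** A topological NDS indexed from 0: spaces X n with metrics d n, maps
    f n : X n -> X n.+1. *)
Definition is_TNDS (X : nat -> Type) (d : forall n, X n -> X n -> R)
  (f : forall n, X n -> X n.+1) : Prop :=
  [/\ forall n, is_metric (d n), forall n, mcompact (d n) &
      forall n, mcontinuous (d n) (d n.+1) (f n)].

Definition nds_equicontinuous (X : nat -> Type) (d : forall n, X n -> X n -> R)
  (f : forall n, X n -> X n.+1) : Prop :=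
  forall e : R, 0 < e -> exists2 delta : R, 0 < delta &
    forall n (x y : X n), d n x y < delta -> d n.+1 (f n x) (f n y) < e.

Fixpoint iterf (X : nat -> Type) (f : forall n, X n -> X n.+1) (k n : nat)
  : X k -> X (n + k) :=
  match n return X k -> X (n + k) with
  | 0 => fun x => x
  | m.+1 => fun x => f (m + k)%N (@iterf X f k m x)
  end.
Arguments iterf {X} f k n.

Definition bowen (X : nat -> Type) (d : forall n, X n -> X n -> R)
  (f : forall n, X n -> X n.+1) (n : nat) (x y : X 0) : R :=
  \big[Order.max/0]_(i < n) d (i + 0)%N (iterf f 0 i x) (iterf f 0 i y).

Definition rsep (X : nat -> Type) (d : forall n, X n -> X n -> R)
  (f : forall n, X n -> X n.+1) (n : nat) (eps : R) : \bar R :=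
  ereal_sup [set (m%:R)%:E | m in
    [set m : nat | exists p : 'I_m -> X 0,
        forall i j, i != j -> eps < bowen d f n (p i) (p j)]].

Definition eln (x : \bar R) : \bar R :=
  match x with
  | r%:E => (ln r)%:E
  | +oo%E => +oo%E
  | -oo%E => -oo%E
  end.

Definition nds_htop (X : nat -> Type) (d : forall n, X n -> X n -> R)
  (f : forall n, X n -> X n.+1) : \bar R :=
  lim ((fun eps : R =>
          limn_esup (fun n : nat => (eln (rsep d f n eps) * (n%:R^-1)%:E)%E))
       @ 0^'+).

Definition powX (X : nat -> Type) (k : nat) : nat -> Type := fun n => X (n * k)%N.

Definition powd (X : nat -> Type) (d : forall n, X n -> X n -> R) (k : nat)
  : forall n, powX X k n -> powX X k n -> R := fun n => d (n * k)%N.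

Definition powf (X : nat -> Type) (f : forall n, X n -> X n.+1) (k : nat)
  : forall n, powX X k n -> powX X k n.+1 := fun n => iterf f (n * k)%N k.

End NDS.
Arguments powd {R X} d k n.
Arguments powf {X} f k n.

(* Main.v *)
Require Import Defs.
From HB Require Import structures.
From mathcomp Require Import all_boot all_order all_algebra.
From mathcomp Require Import all_classical all_reals all_analysis.
From Stdlib Require Import Eqdep_dec PeanoNat.
From mathcomp Require Import ring lra.
From Stdlib Require Import Eqdep_dec PeanoNat.
Import Order.TTheory GRing.Theory Num.Theory.
Local Open Scope ring_scope.
Set Implicit Arguments. Unset Strict Implicit. Unset Printing Implicit Defensive.

Section Eln.
Variable R : realType.
Local Open Scope ereal_scope.

Definition good (x : \bar R) := x = 0 \/ 1 <= x.

Lemma eln_ge0 x : good x -> 0 <= eln x.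
Proof.
case=> [->|]; first by rewrite /= ln0.
case: x => [r| |] //=.
  by rewrite lee_fin => h; rewrite lee_fin ln_ge0.
Qed.

Lemma eln_le x y : good x -> good y -> x <= y -> eln x <= eln y.
Proof.
move=> gx gy xy; case: gx => [->|x1]; first by have := eln_ge0 gy; rewrite /= ln0.
case: x x1 xy => [r| |] //=; case: y gy => [s| |] //=.
- move=> _; rewrite !lee_fin => r1 rs.
  have r0 : (0 < r)%R by apply: lt_le_trans r1.
  by rewrite ler_ln // posrE; apply: lt_le_trans rs.
- by move=> *; rewrite leey.
Qed.
End Eln.

Section Iter.
Variable X : nat -> Type.
Variable f : forall n, X n -> X n.+1.

Lemma sig_f p q (u : X p) (v : X q) :
  existT X p u = existT X q v -> existT X p.+1 (@f p u) = existT X q.+1 (@f q v).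
Proof.
move=> e.
pose F (s : {n & X n}) := existT X (projT1 s).+1 (@f (projT1 s) (projT2 s)).
change (F (existT X p u) = F (existT X q v)). by rewrite e.
Qed.

Lemma sig_iter k p q (u : X p) (v : X q) :
  existT X p u = existT X q v ->
  existT X (k + p)%N (@iterf X f p k u) = existT X (k + q)%N (@iterf X f q k v).
Proof.
move=> e.
pose F (s : {n & X n}) := existT X (k + projT1 s)%N (@iterf X f (projT1 s) k (projT2 s)).
change (F (existT X p u) = F (existT X q v)). by rewrite e.
Qed.

Lemma iter_comp a n m (x : X a) :
  existT X (n + m + a)%N (@iterf X f a (n + m) x) =
  existT X (n + (m + a))%N (@iterf X f (m + a) n (@iterf X f a m x)).
Proof.
elim: n => [|n IH] //=.
exact: sig_f IH.
Qed.

Lemma iter_pow k i (x : X 0) :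
  existT X ((i + 0) * k)%N (@iterf _ (powf f k) 0 i x) =
  existT X (i * k + 0)%N (@iterf X f 0 (i * k) x).
Proof.
elim: i => [|i IH] //=.
rewrite /powf.
have := sig_iter k IH => ->.
by rewrite -(iter_comp k (i * k) x).
Qed.

End Iter.

Section Gen.
Variable R : realType.
Variable X : nat -> Type.
Variable d : forall n, X n -> X n -> R.
Variable f : forall n, X n -> X n.+1.

Definition term (i : nat) (x y : X 0) : R :=
  @d (i + 0)%N (@iterf X f 0 i x) (@iterf X f 0 i y).

Lemma bowen_ge0 n x y : 0 <= bowen d f n x y.
Proof. exact: bigmax_ge_id. Qed.

Lemma bowen_term n i x y : (i < n)%N -> term i x y <= bowen d f n x y.
Proof.
move=> h; rewrite /bowen /term.
exact: (le_bigmax _ (fun j : 'I_n => @d (j + 0)%N (@iterf X f 0 j x) (@iterf X f 0 j y)) (Ordinal h)).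
Qed.

Lemma bowen_le n x y e : 0 <= e -> (forall i, (i < n)%N -> term i x y <= e) ->
  bowen d f n x y <= e.
Proof.
move=> e0 h; apply: bigmax_le => // i _; exact: h.
Qed.

Lemma bowen_mono m n x y : (m <= n)%N -> bowen d f m x y <= bowen d f n x y.
Proof.
move=> mn; apply: bowen_le; first exact: bowen_ge0.
move=> i im; apply: bowen_term; exact: leq_trans mn.
Qed.

Local Open Scope ereal_scope.

Lemma rsep_ge0 n e : 0 <= rsep d f n e.
Proof.
apply: ereal_sup_ubound; exists 0%N => //.
by exists (fun i : 'I_0 => match i with Ordinal _ h => False_rect _ (notF h) end) => [[]].
Qed.

Lemma rsep_good n e : good (rsep d f n e).
Proof.
have [h|h] := pselect (exists m, (0 < m)%N /\ exists p : 'I_m -> X 0,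
    forall i j, i != j -> (e < bowen d f n (p i) (p j))%R).
- right; case: h => m [m0 hp]; apply: le_trans (_ : (m%:R)%:E <= _).
    by rewrite lee_fin ler1n.
  by apply: ereal_sup_ubound; exists m.
- left; apply/eqP; rewrite eq_le rsep_ge0 andbT.
  apply: ge_ereal_sup => _ [m hm <-]; case: m hm => [|m] hm //.
  by exfalso; apply: h; exists m.+1.
Qed.

End Gen.

Lemma rsep_cmp (R : realType) (X1 X2 : nat -> Type) (d1 : forall n, X1 n -> X1 n -> R)
  (f1 : forall n, X1 n -> X1 n.+1) (d2 : forall n, X2 n -> X2 n -> R)
  (f2 : forall n, X2 n -> X2 n.+1) n1 e1 n2 e2 :
  (forall m (p : 'I_m -> X1 0), (forall i j, i != j -> (e1 < bowen d1 f1 n1 (p i) (p j))%R) ->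
     exists p' : 'I_m -> X2 0, forall i j, i != j -> (e2 < bowen d2 f2 n2 (p' i) (p' j))%R) ->
  (rsep d1 f1 n1 e1 <= rsep d2 f2 n2 e2)%E.
Proof.
move=> h; apply: ereal_sup_le => _ [m [p hp] <-]; exists m => //.
exact: h hp.
Qed.

Lemma sig_d (R : realType) (X : nat -> Type) (d : forall n, X n -> X n -> R)
  p q (a b : X p) (a' b' : X q) :
  existT X p a = existT X q a' -> existT X p b = existT X q b' -> d p a b = d q a' b'.
Proof.
move=> e1 e2; have pq : p = q by exact: (f_equal (@projT1 _ _) e1).
subst q.
have -> := inj_pair2_eq_dec _ Nat.eq_dec _ _ _ _ e1.
by have -> := inj_pair2_eq_dec _ Nat.eq_dec _ _ _ _ e2.
Qed.

Section Pow.
Variable R : realType.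
Variable X : nat -> Type.
Variable d : forall n, X n -> X n -> R.
Variable f : forall n, X n -> X n.+1.

Lemma chain1 r (e : R) : 0 < e -> nds_equicontinuous d f ->
  exists2 delta : R, 0 < delta & forall a (u v : X a), d u v < delta ->
    @d (r + a)%N (@iterf X f a r u) (@iterf X f a r v) < e.
Proof.
move=> e0 eq; elim: r e e0 => [|r IH] e e0.
  by exists e.
have [de de0 hde] := eq e e0.
have [dl dl0 hdl] := IH de de0.
exists dl => // a u v h /=.
exact: hde (hdl _ _ _ h).
Qed.

Lemma chain K (e : R) : 0 < e -> nds_equicontinuous d f ->
  exists2 delta : R, 0 < delta & forall r, (r <= K)%N -> forall a (u v : X a), d u v < delta ->
    @d (r + a)%N (@iterf X f a r u) (@iterf X f a r v) < e.
Proof.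
move=> e0 eq; elim: K => [|K IH].
  exists e => // r; rewrite leqn0 => /eqP -> a u v //.
have [d1 d10 h1] := IH.
have [d2 d20 h2] := chain1 K.+1 e0 eq.
exists (Order.min d1 d2); first by rewrite lt_min d10 d20.
move=> r; rewrite leq_eqVlt => /orP [/eqP ->|rK] a u v h.
  by apply: h2; apply: lt_le_trans h _; rewrite ge_min lexx orbT.
by apply: h1 => //; apply: lt_le_trans h _; rewrite ge_min lexx.
Qed.

Lemma term_pow k q (x y : X 0) :
  term (powd d k) (powf f k) q x y = term d f (q * k)%N x y.
Proof.
rewrite /term /powd.
by apply: (sig_d d); exact: iter_pow.
Qed.

Lemma bowen_pow_le k n x y : (1 <= k)%N ->
  bowen (powd d k) (powf f k) n x y <= bowen d f (n * k)%N x y.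
Proof.
move=> k1; apply: bowen_le; first exact: bowen_ge0.
move=> q qn; rewrite term_pow; apply: bowen_term.
by rewrite ltn_pmul2r.
Qed.

End Pow.

Section Pow2.
Variable R : realType.
Variable X : nat -> Type.
Variable d : forall n, X n -> X n -> R.
Variable f : forall n, X n -> X n.+1.

Lemma bowen_pow_ge k n (e delta : R) (x y : X 0) : (1 <= k)%N -> 0 < e ->
  (forall r, (r <= k)%N -> forall a (u v : X a), d u v < delta ->
    @d (r + a)%N (@iterf X f a r u) (@iterf X f a r v) < e) ->
  bowen (powd d k) (powf f k) n x y < delta -> bowen d f (n * k)%N x y <= e.
Proof.
move=> k1 e0 hch hb; apply: bowen_le; first exact: ltW.
move=> i ilt.
have -> : i = (i %% k + i %/ k * k)%N by rewrite addnC -divn_eq.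
set r := (i %% k)%N; set q := (i %/ k)%N.
have rk : (r < k)%N by rewrite ltn_pmod.
have qn : (q < n)%N by rewrite ltn_divLR.
have hq : term d f (q * k)%N x y < delta.
  rewrite -term_pow; apply: le_lt_trans hb; exact: bowen_term.
have := hch r (ltnW rk) _ _ _ hq.
move=> h; apply: ltW; move: h; congr (_ < _).
rewrite /term; apply: (sig_d d); symmetry; exact: iter_comp.
Qed.

End Pow2.

Section Rsep.
Variable R : realType.
Variable X : nat -> Type.
Variable d : forall n, X n -> X n -> R.
Variable f : forall n, X n -> X n.+1.
Local Open Scope ereal_scope.

Lemma rsep_mono_n m n e : (m <= n)%N -> rsep d f m e <= rsep d f n e.
Proof.
move=> mn; apply: rsep_cmp => M p hp; exists p => i j ij.
apply: lt_le_trans (hp _ _ ij) _; exact: bowen_mono.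
Qed.

Lemma rsep_mono_e n (e1 e2 : R) : (e1 <= e2)%R -> rsep d f n e2 <= rsep d f n e1.
Proof.
move=> le; apply: rsep_cmp => M p hp; exists p => i j ij.
exact: le_lt_trans le (hp _ _ ij).
Qed.

Lemma rsep_pow_up k n e : (1 <= k)%N ->
  rsep (powd d k) (powf f k) n e <= rsep d f (n * k)%N e.
Proof.
move=> k1; apply: rsep_cmp => M p hp; exists p => i j ij.
apply: lt_le_trans (hp _ _ ij) _; exact: bowen_pow_le.
Qed.

Lemma rsep_pow_low k n (e delta : R) : (1 <= k)%N -> (0 < e)%R -> (0 < delta)%R ->
  (forall r, (r <= k)%N -> forall a (u v : X a), (d u v < delta)%R ->
    (@d (r + a)%N (@iterf X f a r u) (@iterf X f a r v) < e)%R) ->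
  rsep d f (n * k)%N e <= rsep (powd d k) (powf f k) n (delta / 2).
Proof.
move=> k1 e0 de0 hch; apply: rsep_cmp => M p hp; exists p => i j ij.
rewrite ltNge; apply/negP => hle.
have := hp _ _ ij; apply/negP; rewrite -leNgt.
apply: (bowen_pow_ge k1 e0 hch).
apply: le_lt_trans hle _.
by rewrite ltr_pdivrMr // ltr_pMr // ltr1n.
Qed.

End Rsep.

Section LS.
Variable R : realType.
Local Open Scope classical_set_scope.
Local Open Scope ereal_scope.
Implicit Types u v : nat -> \bar R.

Lemma LS1 u y : limn_esup u < y -> exists N, forall n, (N <= n)%N -> u n < y.
Proof.
rewrite /limn_esup limf_esupE => /ereal_inf_lt [_ [V hV <-] hlt].
case: hV => N _ hN; exists N => n Nn.
apply: le_lt_trans hlt; apply: ereal_sup_ubound; exists n => //; exact: hN.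
Qed.

Lemma LS2 u z : (exists N, forall n, (N <= n)%N -> u n <= z) -> limn_esup u <= z.
Proof.
case=> N hN; rewrite /limn_esup limf_esupE.
apply: le_trans (_ : ereal_sup (u @` [set n : nat | (N <= n)%N]) <= _).
  apply: ereal_inf_lbound; exists [set n : nat | (N <= n)%N] => //; by exists N.
by apply: ge_ereal_sup => _ [n hn <-]; exact: hN.
Qed.

Lemma LSM u v : (forall n, u n <= v n) -> limn_esup u <= limn_esup v.
Proof.
move=> uv; rewrite /limn_esup !limf_esupE.
apply: le_ereal_inf_tmp => _ [V hV <-].
apply: le_trans (_ : ereal_sup (u @` V) <= _).
  by apply: ereal_inf_lbound; exists V.
by apply: ge_ereal_sup => _ [n hn <-]; apply: le_trans (uv n) _; apply: ereal_sup_ubound; exists n.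
Qed.

Lemma LS0 u : (forall n, 0 <= u n) -> 0 <= limn_esup u.
Proof. by move=> h; apply: limf_esup_ge0 => //; apply: eventually_proper. Qed.

End LS.

Section Ent.
Variable R : realType.
Variable X : nat -> Type.
Variable d : forall n, X n -> X n -> R.
Variable f : forall n, X n -> X n.+1.
Local Open Scope classical_set_scope.
Local Open Scope ereal_scope.

Definition ga (e : R) (n : nat) := eln (rsep d f n e) * (n%:R^-1)%:E.
Definition gg (e : R) := limn_esup (ga e).

Lemma ga_ge0 e n : 0 <= ga e n.
Proof. by apply: mule_ge0; [exact/eln_ge0/rsep_good|rewrite lee_fin invr_ge0]. Qed.

Lemma gg_ge0 e : 0 <= gg e.
Proof. by apply: LS0 => n; exact: ga_ge0. Qed.

Lemma gg_noninc (e1 e2 : R) : (e1 <= e2)%R -> gg e2 <= gg e1.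
Proof.
move=> le; apply: LSM => n; rewrite /ga; apply: lee_wpmul2r.
  by rewrite lee_fin invr_ge0.
by apply: eln_le; [exact: rsep_good|exact: rsep_good|exact: rsep_mono_e].
Qed.

Lemma htopE : nds_htop d f =
  ereal_sup (gg @` [set` Interval (BRight 0%R) (BInfty R false)]).
Proof.
rewrite /nds_htop; apply: cvg_lim => //.
apply: (nonincreasing_at_right_cvge (BInfty R false)) => //.
by move=> x y _ _; exact: gg_noninc.
Qed.

End Ent.

Lemma real_ineq (R : realType) (l t s eps k m n : R) : 0 <= l -> l <= t ->
  t < (s + k * eps / 2) * n -> n * k <= m + k -> 2 * (s + k * eps / 2) <= m * eps ->
  1 <= k -> 1 <= m -> 0 < n -> 0 <= s -> 0 < eps -> l / m <= s / k + eps.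
Proof.
move=> l0 lt ht hn hm k1 m1 n0 s0 e0.
have m0 : 0 < m by lra.
have k0 : 0 < k by lra.
rewrite ler_pdivrMr //.
have -> : (s / k + eps) * m = ((s + k * eps) * m) / k by field; lra.
rewrite ler_pdivlMr //.
have h1 : l * k <= t * k by rewrite ler_pM2r.
have h2 : t * k <= (s + k * eps / 2) * (n * k) by rewrite mulrA ler_pM2r //; exact: ltW.
have ke : 0 < k * eps by exact: mulr_gt0.
have c0 : 0 < s + k * eps / 2 by lra.
have h3 : (s + k * eps / 2) * (n * k) <= (s + k * eps / 2) * (m + k).
  by rewrite ler_pM2l.
nra.
Qed.

Lemma real_eq (R : realType) (k r e : R) : 0 < k -> k * (r + e / k) = k * r + e.
Proof. move=> k0; field; lra. Qed.

Section Main.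
Variable R : realType.
Variable X : nat -> Type.
Variable d : forall n, X n -> X n -> R.
Variable f : forall n, X n -> X n.+1.
Variable k : nat.
Hypothesis k1 : (1 <= k)%N.
Local Open Scope ereal_scope.

Lemma P1 e n : ga (powd d k) (powf f k) e n <= k%:R%:E * ga d f e (n * k).
Proof.
have eq : (k%:R * ((n * k)%:R)^-1 = n%:R^-1 :> R)%R.
  by rewrite natrM invfM mulrCA mulfV ?mulr1 // pnatr_eq0 -lt0n.
rewrite /ga muleCA -EFinM eq.
apply: lee_wpmul2r; first by rewrite lee_fin invr_ge0.
apply: eln_le; [exact: rsep_good|exact: rsep_good|exact: rsep_pow_up].
Qed.

Lemma Up e : gg (powd d k) (powf f k) e <= k%:R%:E * gg d f e.
Proof.
have k0 : (0 < k%:R :> R)%R by rewrite ltr0n.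
have := gg_ge0 d f e; case E : (gg d f e) => [r| |] //= r0; last first.
  by rewrite gt0_muley ?leey // lte_fin.
apply/lee_addgt0Pr => eps eps0.
have [N hN] : exists N, forall n, (N <= n)%N -> ga d f e n < (r + eps / k%:R)%:E.
  apply: LS1; rewrite -/(gg d f e) E lte_fin ltrDl divr_gt0 //.
apply: LS2; exists N => n Nn.
apply: le_trans (P1 e n) _.
apply: le_trans (_ : k%:R%:E * (r + eps / k%:R)%:E <= _).
  apply: lee_wpmul2l; first by rewrite lee_fin ltW.
  apply: ltW; apply: hN; apply: leq_trans Nn _; exact: leq_pmulr.
by rewrite -EFinM -EFinD real_eq.
Qed.


Lemma Lo e : (0 < e)%R -> nds_equicontinuous d f ->
  exists2 de : R, (0 < de)%R & k%:R%:E * gg d f e <= gg (powd d k) (powf f k) de.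
Proof.
move=> e0 eq; have [de de0 hch] := chain k e0 eq.
have k0 : (0 < k%:R :> R)%R by rewrite ltr0n.
have de20 : (0 < de / 2)%R by rewrite divr_gt0.
exists (de / 2)%R => //.
have := gg_ge0 (powd d k) (powf f k) (de / 2)%R.
case E : (gg (powd d k) (powf f k) (de / 2)%R) => [s| |] //= s0; last by rewrite leey.
rewrite lee_fin in s0.
suff H : gg d f e <= (s / k%:R)%:E.
  apply: le_trans (_ : k%:R%:E * (s / k%:R)%:E <= _).
    by apply: lee_wpmul2l; [rewrite lee_fin ltW|].
  by rewrite -EFinM mulrCA mulfV ?mulr1 // gt_eqF.
apply/lee_addgt0Pr => eps eps0.
set e' := (k%:R * eps / 2)%R.
have e'0 : (0 < e')%R by rewrite divr_gt0 // mulr_gt0.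
have [N hN] : exists N, forall n, (N <= n)%N ->
    ga (powd d k) (powf f k) (de / 2)%R n < (s + e')%:E.
  by apply: LS1; rewrite -/(gg _ _ _) E lte_fin ltrDl.
apply: LS2.
set B := (Num.truncn (2 * (s + e') / eps)).+1.
exists (maxn (N * k) B).+1 => m hm.
have mNk : (N * k <= m)%N by apply: leq_trans (ltnW hm); rewrite leq_max leqnn.
have mB : (B <= m)%N by apply: leq_trans (ltnW hm); rewrite leq_max leqnn orbT.
have m1 : (1 <= m)%N by apply: leq_trans hm.
set n := (m %/ k).+1.
have Nn : (N <= n)%N by apply: leqW; rewrite leq_divRL.
have hA := hN n Nn.
have hLm : eln (rsep d f m e) <= eln (rsep (powd d k) (powf f k) n (de / 2)%R).
  apply: eln_le; [exact: rsep_good|exact: rsep_good|].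
  apply: le_trans (rsep_mono_n d f e (ltnW (ltn_ceil m k1))) _.
  exact: rsep_pow_low.
have hnk : (n * k <= m + k)%N by rewrite /n mulSnr leq_add2r leq_trunc_div.
have hme : (2 * (s + e') < m%:R * eps)%R.
  rewrite -ltr_pdivrMr //; apply: lt_le_trans (Num.Theory.truncnS_gt _) _.
  by rewrite ler_nat.
move: hA hLm; rewrite /ga.
have gL := eln_ge0 (rsep_good (powd d k) (powf f k) n (de / 2)%R).
have gl := eln_ge0 (rsep_good d f m e).
case: (eln (rsep (powd d k) (powf f k) n (de / 2)%R)) gL => [t| |] // t0; last first.
  by rewrite gt0_mulye ?lte_fin ?invr_gt0 ?ltr0n.
case: (eln (rsep d f m e)) gl => [l| |] // l0; rewrite ?lee_fin -?EFinM ?lte_fin => hA hlt.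
  rewrite lee_fin in l0; rewrite lee_fin in t0.
  apply: (real_ineq (t := t) (n := n%:R)) => //.
  all: try by rewrite ?ler1n ?ltr0n.
  all: try by rewrite -ltr_pdivrMr ?ltr0n.
  all: try by rewrite -natrM -natrD ler_nat.
  all: try exact: ltW.
Qed.

End Main.

Theorem mainTheorem9 (R : realType) (X : nat -> Type)
  (d : forall n, X n -> X n -> R) (f : forall n, X n -> X n.+1) :
  is_TNDS d f -> nds_equicontinuous d f ->
  forall k : nat, (1 <= k)%N ->
    nds_htop (powd d k) (powf f k) = ((k%:R : R)%:E * nds_htop d f)%E.
Proof.
move=> _ eq k k1.
have k0 : (0 < k%:R :> R)%R by rewrite ltr0n.
rewrite !htopE; apply/eqP; rewrite eq_le; apply/andP; split.
- apply: ge_ereal_sup => _ [e e_in <-].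
  apply: le_trans (Up d f k1 e) _.
  apply: lee_wpmul2l; first by rewrite lee_fin ltW.
  by apply: ereal_sup_ubound; exists e.
- rewrite -ereal_supZl; last exact: ltW.
    apply: ge_ereal_sup => _ [_ [e e_in <-] <-].
    have e0 : (0 < e)%R by move: e_in; rewrite /= in_itv /= andbT.
    have [de de0 hde] := Lo k1 e0 eq.
    apply: le_trans hde _.
    apply: ereal_sup_ubound; exists de => //.
    by rewrite /= in_itv /= andbT.
  apply/set0P; exists (gg d f 1); exists 1%R => //.
  by rewrite /= in_itv /= andbT ltr01.
Qed.
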